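(* Let $r\ge 3$ and let $\mathcal H=(V,E)$ be an $r$-uniform bi-hypergraph with $|V|=2r$. If $|E|<\binom{2r}{r}/2$, then $\mathcal H$ is colorable.
   Context: A bi-hypergraph $\mathcal H=(V,E)$ consists of a finite vertex set $V$ and a set $E$ of subsets of $V$, called edges, with no edge contained in another. It is $r$-uniform if every edge has exactly $r$ elements. A mapping $f:V\to\mathbb N$ is a proper coloring of $\mathcal H$ if $1<|f(e)|<|e|$ for every $e\in E$, where $f(e)=\{f(v):v\in e\}$. $\mathcal H$ is colorable if it has a proper coloring. *)

(* Defs.v *)
From mathcomp Require Import all_boot.
Set Implicit Arguments. Unset Strict Implicit. Unset Printing Implicit Defensive.

Definition bihypergraph (V : finType) (E : {set {set V}}) : Prop :=
  forall e1 e2, e1 \in E -> e2 \in E -> e1 \subset e2 -> e1 = e2.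

Definition uniform (V : finType) (r : nat) (E : {set {set V}}) : Prop :=
  forall e, e \in E -> #|e| = r.

Definition proper_coloring (V : finType) (E : {set {set V}}) (f : V -> nat) : Prop :=
  forall e, e \in E -> 1 < size (undup [seq f v | v <- enum e]) < #|e|.

Definition colorable (V : finType) (E : {set {set V}}) : Prop :=
  exists f : V -> nat, proper_coloring E f.

(* Main.v *)
Require Import Defs.
From mathcomp Require Import all_boot zify.

Theorem mainTheorem8 (r : nat) (V : finType) (E : {set {set V}}) :
  3 <= r -> bihypergraph E -> uniform r E -> #|V| = 2 * r ->
  2 * #|E| < 'C(2 * r, r) -> colorable E.
Proof.
move=> r3 _ unif cardV hE.
have [S /andP [/eqP cS /andP [SE CSE]]] :
    exists S : {set V}, (#|S| == r) && ((S \notin E) && (~: S \notin E)).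
  apply/existsP; case: (boolP [exists S : {set V}, (#|S| == r) && ((S \notin E) && (~: S \notin E))]) => // /existsPn H.
  have sub : [set A : {set V} | #|A| == r] \subset E :|: [set ~: A | A in E].
    apply/subsetP => A; rewrite inE => cA.
    move: (H A); rewrite cA /= negb_and !negbK => /orP [AE|CAE].
      by rewrite inE AE.
    by rewrite inE; apply/orP; right; apply/imsetP; exists (~: A) => //; rewrite setCK.
  move: (subset_leq_card sub); rewrite card_draws cardV => h.
  have := leq_trans h (leq_trans (leq_card_setU _ _) (leq_add (leqnn _) (leq_imset_card _ _))).
  by rewrite addnn -mul2n leqNgt hE.
have cCS : #|~: S| = r by rewrite cardsCs setCK cardV cS; lia.
exists (fun v => nat_of_bool (v \in S)) => e eE.
have ce := unif e eE.
have HS : exists2 x, x \in e & x \in S.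
  case: (boolP [exists x in e, x \in S]) => [/exists_inP //| /exists_inP H].
  have : e \subset ~: S.
    by apply/subsetP => x xe; rewrite inE; apply/negP => xS; apply: H; exists x.
  move=> sub; have /eqP eq : e == ~: S by rewrite eqEcard sub ce cCS leqnn.
  by move: eE; rewrite eq (negbTE CSE).
have HC : exists2 x, x \in e & x \notin S.
  case: (boolP [exists x in e, x \notin S]) => [/exists_inP //| /exists_inP H].
  have : e \subset S.
    by apply/subsetP => x xe; apply/negPn/negP => xS; apply: H; exists x.
  move=> sub; have /eqP eq : e == S by rewrite eqEcard sub ce cS leqnn.
  by move: eE; rewrite eq (negbTE SE).
apply/andP; split.
  case: HS => x xe xS; case: HC => y ye yS.
  have : size [:: 0; 1] <= size (undup [seq nat_of_bool (v \in S) | v <- enum e]).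
    apply: uniq_leq_size => // z; rewrite !inE mem_undup => /orP [] /eqP ->.
      by apply/mapP; exists y; rewrite ?mem_enum // (negbTE yS).
    by apply/mapP; exists x; rewrite ?mem_enum // xS.
  by [].
have : size (undup [seq nat_of_bool (v \in S) | v <- enum e]) <= size [:: 0; 1].
  apply: uniq_leq_size; first exact: undup_uniq.
  move=> z; rewrite mem_undup => /mapP [v _ ->]; rewrite !inE.
  by case: (v \in S).
by rewrite ce /=; move=> h; apply: leq_ltn_trans h _; lia.
Qed.
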